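(* Let $G$ be a graph and $m\geq 1$. Suppose $E(G)$ is partitioned into the edge set of a DVOP$[k']$ in $G$ and a complementary edge set $E'$, and also $E(G)$ is partitioned into the edge set of a DVOP$[k'']$ in $G$ and a complementary edge set $E''$. Then $E(m\#G)$ can be partitioned into the edge sets of $|V(G)|$ paths each isomorphic to $P_{k'+m+k''}$, together with the copy of $E'$ in $G'$ and the copy of $E''$ in $G''$.
   Context: $P_k$ is the path with vertices $0,1,\dots,k$ and edges $\hat{j}$ joining $j-1$ and $j$. For a graph $G$, a DVOP$[k]$ is a family $\{p_v\}_{v\in V(G)}$ of embeddings $p_v:P_k\to G$ such that (a) $p_v(\hat{j})=p_{v'}(\hat{j'})$ implies $v=v'$ and $j=j'$, and (b) $p_v(0)=v$ for every $v$; its edge set is the union of the edge images of all $p_v$. For a graph $G$ and $m\geq 1$, $m\#G$ is the graph obtained by taking two disjoint copies $G'$ and $G''$ of $G$ and joining each vertex $v'\in V(G')$ to the corresponding vertex $v''\in V(G'')$ by a path with $m$ edges, these new paths being internally vertex-disjoint from each other and from $G'\cup G''$. *)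

(* Defs.v *)
From mathcomp Require Import all_boot.
Set Implicit Arguments. Unset Strict Implicit. Unset Printing Implicit Defensive.

(* A (finite simple) graph is a vertex type T : finType with a symmetric,
   irreflexive adjacency relation e. Edges are unordered pairs {x,y}. *)
Section Graphs.
Variables (T : finType) (e : rel T).

Definition Egraph : {set {set T}} :=
  [set s | [exists x, exists y, e x y && (s == [set x; y])]].

(* For f : 'I_k.+1 -> T (image of the vertices 0..k of P_k) and j : 'I_k,
   pedge f j is the image of the edge \hat{j+1} joining vertices j and j+1. *)
Definition pedge (k : nat) (f : 'I_k.+1 -> T) (j : 'I_k) : {set T} :=
  [set f (widen_ord (leqnSn k) j); f (lift ord0 j)].

Definition embedding (k : nat) (f : 'I_k.+1 -> T) : Prop :=
  injective f /\ forall j : 'I_k, e (f (widen_ord (leqnSn k) j)) (f (lift ord0 j)).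

Definition DVOP (k : nat) (p : T -> 'I_k.+1 -> T) : Prop :=
  [/\ forall v, embedding (p v),
      forall v v' (j j' : 'I_k), pedge (p v) j = pedge (p v') j' -> v = v' /\ j = j'
    & forall v, p v ord0 = v].

End Graphs.

(* union of the edge images of a family of maps P_k -> G indexed by I;
   for I = V(G) and p a DVOP this is the edge set of the DVOP *)
Definition dvop_edges (I T : finType) (k : nat) (p : I -> 'I_k.+1 -> T)
  : {set {set T}} :=
  [set pedge (p v) j | v : I, j : 'I_k].

(* m#G on vertex type T * 'I_m.+1 : (v,0) is v' in G', (v,m) is v'' in G'',
   and (v,1),...,(v,m-1) are the internal vertices of the path v'--v''.
   (Intended for m >= 1.) *)
Definition sharp (T : finType) (e : rel T) (m : nat) : rel (T * 'I_m.+1) :=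
  fun a b =>
    [|| [&& val a.2 == 0, val b.2 == 0 & e a.1 b.1],
        [&& val a.2 == m, val b.2 == m & e a.1 b.1]
      | (a.1 == b.1) && (((val a.2).+1 == val b.2) || ((val b.2).+1 == val a.2))].

Definition lift_set (T : finType) (m : nat) (i : 'I_m.+1) (s : {set T})
  : {set (T * 'I_m.+1)} := [set (x, i) | x in s].

Definition copy_at (T : finType) (m : nat) (i : 'I_m.+1) (E : {set {set T}})
  : {set {set (T * 'I_m.+1)}} :=
  [set lift_set i s | s in E].

Arguments sharp [T] e m _ _.

(* Main.v *)
Require Import Defs.
From mathcomp Require Import all_boot zify.
Set Implicit Arguments. Unset Strict Implicit. Unset Printing Implicit Defensive.

Lemma mem_lift (T : finType) m (i j : 'I_m.+1) (s : {set T}) x :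
  ((x, j) \in lift_set i s) = (j == i) && (x \in s).
Proof.
apply/imsetP/andP => [[y ys [-> ->]]|[/eqP -> xs]]; first by rewrite eqxx.
by exists x.
Qed.

Lemma lift2 (T : finType) m (i : 'I_m.+1) (a b : T) :
  lift_set i [set a; b] = [set (a, i); (b, i)].
Proof.
apply/setP => -[x j]; rewrite mem_lift !in_set2 !xpair_eqE.
by case: (j == i); rewrite ?andbT ?andbF.
Qed.

Lemma liftset_inj (T : finType) m (i : 'I_m.+1) (s s' : {set T}) :
  lift_set i s = lift_set i s' -> s = s'.
Proof.
move=> H; apply/setP => x; have := congr1 (fun S : {set T * 'I_m.+1} => (x, i) \in S) H.
by rewrite !mem_lift eqxx.
Qed.

Lemma set2_mem (T : finType) (a b c d : T) :
  [set a; b] = [set c; d] -> (a = c \/ a = d) /\ (b = c \/ b = d).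
Proof.
move=> H; have ha : a \in [set c; d] by rewrite -H set21.
have hb : b \in [set c; d] by rewrite -H set22.
by move: ha hb; rewrite !in_set2 => /orP[]/eqP-> /orP[]/eqP->; tauto.
Qed.

Lemma vin m t : t <= m -> val (@inord m t) = t.
Proof. move=> h; apply: inordK; lia. Qed.

Lemma lift_in (T : finType) m (i : 'I_m.+1) (s : {set T}) x :
  x \in s -> (x, i) \in lift_set i s.
Proof. by move=> h; rewrite mem_lift eqxx. Qed.

Lemma lift_lvl (T : finType) m (i j : 'I_m.+1) (s : {set T}) x :
  (x, j) \in lift_set i s -> val j = val i.
Proof. by rewrite mem_lift => /andP[/eqP -> _]. Qed.

Lemma pedge_in1 (T : finType) k (f : 'I_k.+1 -> T) j :
  f (widen_ord (leqnSn k) j) \in pedge f j.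
Proof. by rewrite /pedge set21. Qed.

Definition qn (T : finType) (m k1 k2 : nat) (p1 : T -> 'I_k1.+1 -> T)
  (p2 : T -> 'I_k2.+1 -> T) (v : T) (i : nat) : T * 'I_m.+1 :=
  if i <= k1 then (p1 v (inord (k1 - i)), ord0)
  else if i <= k1 + m then (v, inord (i - k1))
  else (p2 v (inord (i - k1 - m)), ord_max).

Lemma inord0 n : @inord n 0 = ord0.
Proof. by apply: val_inj; rewrite /= vin. Qed.

Lemma inordmax n : @inord n n = ord_max.
Proof. by apply: val_inj; rewrite /= vin. Qed.

Section Q.
Variables (T : finType) (m k1 k2 : nat) (p1 : T -> 'I_k1.+1 -> T)
  (p2 : T -> 'I_k2.+1 -> T).
Notation qn := (@qn T m k1 k2 p1 p2).

Lemma qn_lo v i : i <= k1 -> qn v i = (p1 v (inord (k1 - i)), ord0).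
Proof. by rewrite /qn => ->. Qed.

Lemma qn_mid v i : p1 v ord0 = v -> k1 <= i <= k1 + m -> qn v i = (v, inord (i - k1)).
Proof.
move=> h0 /andP[h1 h2]; rewrite /qn h2; case: ifP => h3 //.
have -> : i = k1 by lia.
by rewrite subnn !inord0 h0.
Qed.

Lemma qn_hi v i : 0 < m -> p2 v ord0 = v -> k1 + m <= i -> qn v i = (p2 v (inord (i - k1 - m)), ord_max).
Proof.
move=> hm h0 h1; rewrite /qn; case: ifP => h3; first lia.
case: ifP => h4 //.
have -> : i = k1 + m by lia.
by rewrite addKn subnn inord0 h0 inordmax.
Qed.

Lemma qn_lvl v i : val (qn v i).2 = if i <= k1 then 0 else if i <= k1 + m then i - k1 else m.
Proof.
rewrite /qn; case: ifP => h1 //; case: ifP => h2 //=; rewrite vin //; lia.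
Qed.


Lemma seg_lo v j (j1 : 'I_k1) : j.+1 + j1 = k1 ->
  [set qn v j; qn v j.+1] = lift_set ord0 (pedge (p1 v) j1).
Proof.
move=> h; rewrite !qn_lo; try lia.
rewrite /pedge lift2 setUC; congr [set (p1 v _, _); (p1 v _, _)];
  apply: val_inj; rewrite /= ?vin /bump ?leq0n ?add1n /=; lia.
Qed.

Lemma seg_mid v j : p1 v ord0 = v -> k1 <= j < k1 + m ->
  [set qn v j; qn v j.+1] = [set (v, inord (j - k1)); (v, inord (j.+1 - k1))].
Proof.
by move=> h0 h; rewrite !qn_mid //; lia.
Qed.

Lemma seg_hi v j (j2 : 'I_k2) : 0 < m -> p2 v ord0 = v -> j = k1 + m + j2 ->
  [set qn v j; qn v j.+1] = lift_set ord_max (pedge (p2 v) j2).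
Proof.
move=> hm h0 h; rewrite !qn_hi //; try lia.
rewrite /pedge lift2; congr [set (p2 v _, _); (p2 v _, _)];
  apply: val_inj; rewrite /= ?vin /bump ?leq0n ?add1n /=; have := ltn_ord j2; lia.
Qed.


Lemma qn_lvl' v i : (i <= k1 /\ val (qn v i).2 = 0) \/
  (k1 < i <= k1 + m /\ val (qn v i).2 = i - k1) \/ (k1 + m < i /\ val (qn v i).2 = m).
Proof.
rewrite qn_lvl; case: ifP => h1; first by left.
case: ifP => h2; right; [left|right]; split => //; lia.
Qed.

End Q.

Lemma q_emb (T : finType) (e : rel T) (e_sym : symmetric e) (m k1 k2 : nat) (hm : 1 <= m)
  (p1 : T -> 'I_k1.+1 -> T) (p2 : T -> 'I_k2.+1 -> T) v :
  embedding e (p1 v) -> p1 v ord0 = v -> embedding e (p2 v) -> p2 v ord0 = v ->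
  embedding (sharp e m) (fun i : 'I_(k1 + m + k2).+1 => @qn T m k1 k2 p1 p2 v i).
Proof.
move=> [i1 a1] z1 [i2 a2] z2; split.
  move=> i i' H; apply: ord_inj.
  have hi := ltn_ord i; have hi' := ltn_ord i'.
  have lo : i <= k1 -> i' <= k1 -> (i : nat) = i'.
    move=> a b; move: H; rewrite !qn_lo // => -[/i1 /(congr1 val)]; rewrite /= !vin; lia.
  have hh : k1 + m <= i -> k1 + m <= i' -> (i : nat) = i'.
    move=> a b; move: H; rewrite !qn_hi // => -[/i2 /(congr1 val)]; rewrite /= !vin; lia.
  have := qn_lvl' m p1 p2 v i; have := qn_lvl' m p1 p2 v i'; rewrite H; lia.
move=> j; have -> : nat_of_ord (lift ord0 j) = j.+1 by rewrite lift0.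
rewrite /=.
have hj := ltn_ord j.
case: (ltnP j k1) => h.
  have hj1 : k1 - j.+1 < k1 by lia.
  have := a1 (Ordinal hj1).
  rewrite !qn_lo; try lia.
  have -> : inord (k1 - j) = lift ord0 (Ordinal hj1).
    apply: val_inj; rewrite /= vin /bump ?leq0n ?add1n /=; lia.
  have -> : inord (k1 - j.+1) = widen_ord (leqnSn k1) (Ordinal hj1).
    apply: val_inj; rewrite /= vin; lia.
  by rewrite /sharp /= e_sym => ->.
case: (ltnP j (k1 + m)) => h'.
  rewrite !qn_mid //; try lia.
  rewrite /sharp /= eqxx /= !vin; lia.
have hj2 : j - k1 - m < k2 by lia.
have := a2 (Ordinal hj2).
rewrite !qn_hi //; try lia.
have -> : inord (j.+1 - k1 - m) = lift ord0 (Ordinal hj2).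
  apply: val_inj; rewrite /= vin /bump ?leq0n ?add1n /=; lia.
have -> : inord (j - k1 - m) = widen_ord (leqnSn k2) (Ordinal hj2).
  apply: val_inj; rewrite /= vin; lia.
rewrite /sharp /= eqxx => ->; by rewrite orbT.
Qed.

Lemma q_pedge (T : finType) (m k1 k2 : nat)
  (p1 : T -> 'I_k1.+1 -> T) (p2 : T -> 'I_k2.+1 -> T) v (j : 'I_(k1 + m + k2)) :
  pedge (fun i : 'I_(k1 + m + k2).+1 => @qn T m k1 k2 p1 p2 v i) j =
  [set qn m p1 p2 v j; qn m p1 p2 v j.+1].
Proof. by rewrite /pedge (_ : nat_of_ord (lift ord0 j) = j.+1) ?lift0. Qed.

Lemma q_cls (T : finType) (m k1 k2 : nat) (hm : 1 <= m)
  (p1 : T -> 'I_k1.+1 -> T) (p2 : T -> 'I_k2.+1 -> T) v (j : 'I_(k1 + m + k2)) :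
  p1 v ord0 = v -> p2 v ord0 = v ->
  let S := pedge (fun i : 'I_(k1 + m + k2).+1 => @qn T m k1 k2 p1 p2 v i) j in
  [\/ exists2 j1 : 'I_k1, j.+1 + j1 = k1 & S = lift_set ord0 (pedge (p1 v) j1),
      k1 <= j < k1 + m /\ S = [set (v, inord (j - k1)); (v, inord (j.+1 - k1))]
    | exists2 j2 : 'I_k2, (j : nat) = k1 + m + j2 & S = lift_set ord_max (pedge (p2 v) j2)].
Proof.
move=> z1 z2 S; rewrite /S q_pedge; have hj := ltn_ord j.
case: (ltnP j k1) => h.
  have hj1 : k1 - j.+1 < k1 by lia.
  apply: Or31; exists (Ordinal hj1); first by rewrite /=; lia.
  by apply: seg_lo => /=; lia.
case: (ltnP j (k1 + m)) => h'.
  by apply: Or32; split; [lia | apply: seg_mid => //; lia].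
have hj2 : j - k1 - m < k2 by lia.
apply: Or33; exists (Ordinal hj2); first by rewrite /=; lia.
by apply: seg_hi => //=; lia.
Qed.

Theorem lemma7 (T : finType) (e : rel T) (e_sym : symmetric e)
  (e_irr : irreflexive e) (m k1 k2 : nat) (hm : 1 <= m)
  (p1 : T -> 'I_k1.+1 -> T) (p2 : T -> 'I_k2.+1 -> T)
  (E1 E2 : {set {set T}}) :
  DVOP e p1 -> dvop_edges p1 :&: E1 = set0 -> dvop_edges p1 :|: E1 = Egraph e ->
  DVOP e p2 -> dvop_edges p2 :&: E2 = set0 -> dvop_edges p2 :|: E2 = Egraph e ->
  exists q : T -> 'I_(k1 + m + k2).+1 -> T * 'I_m.+1,
    [/\ forall v, embedding (sharp e m) (q v),
        forall v v' (j j' : 'I_(k1 + m + k2)),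
          pedge (q v) j = pedge (q v') j' -> v = v' /\ j = j',
        [/\ dvop_edges q :&: copy_at (@ord0 m) E1 = set0,
             dvop_edges q :&: copy_at (@ord_max m) E2 = set0
           & copy_at (@ord0 m) E1 :&: copy_at (@ord_max m) E2 = set0]
      & dvop_edges q :|: copy_at (@ord0 m) E1 :|: copy_at (@ord_max m) E2
          = Egraph (sharp e m)].
Proof.
move=> [em1 ds1 z1] d1 u1 [em2 ds2 z2] d2 u2.
exists (fun v (i : 'I_(k1 + m + k2).+1) => @qn T m k1 k2 p1 p2 v i).
have cls := fun v j => @q_cls T m k1 k2 hm p1 p2 v j (z1 v) (z2 v).
have m0 : (ord_max : 'I_m.+1) != ord0 by rewrite -val_eqE /=; lia.
split.
- by move=> v; apply: q_emb.
- move=> v v' j j' H.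
  have hj := ltn_ord j; have hj' := ltn_ord j'.
  case: (cls v j) => [[a ea Ea] | [ra Ea] | [a ea Ea]];
  case: (cls v' j') => [[b eb Eb] | [rb Eb] | [b eb Eb]]; move: H; rewrite Ea Eb => H.
  + have [-> hab] := ds1 _ _ _ _ (liftset_inj H); split => //; apply: ord_inj.
    move: (congr1 (@nat_of_ord _) hab); lia.
  + have: (v', inord (j'.+1 - k1)) \in lift_set (@ord0 m) (pedge (p1 v) a) by rewrite H set22.
    move/lift_lvl; rewrite /= vin; lia.
  + have: (p2 v' (widen_ord (leqnSn k2) b), ord_max) \in lift_set (@ord0 m) (pedge (p1 v) a).
      by rewrite H lift_in ?pedge_in1.
    move/lift_lvl => /=; lia.
  + have: (v, inord (j.+1 - k1)) \in lift_set (@ord0 m) (pedge (p1 v') b) by rewrite -H set22.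
    move/lift_lvl; rewrite /= vin; lia.
  + case: (set2_mem H) => [[h|h] [h'|h']]; case: h => hv hh; case: h' => _ hh'; split => //;
    apply: ord_inj; move: (congr1 val hh) (congr1 val hh'); rewrite /= !vin; lia.
  + have: (v, inord (j - k1)) \in lift_set (@ord_max m) (pedge (p2 v') b) by rewrite -H set21.
    move/lift_lvl; rewrite /= vin; lia.
  + have: (p2 v (widen_ord (leqnSn k2) a), ord_max) \in lift_set (@ord0 m) (pedge (p1 v') b).
      by rewrite -H lift_in ?pedge_in1.
    move/lift_lvl => /=; lia.
  + have: (v', inord (j' - k1)) \in lift_set (@ord_max m) (pedge (p2 v) a) by rewrite H set21.
    move/lift_lvl; rewrite /= vin; lia.
  + have [-> hab] := ds2 _ _ _ _ (liftset_inj H); split => //; apply: ord_inj.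
    move: (congr1 (@nat_of_ord _) hab); lia.
- split.
  + apply/setP => s; rewrite inE in_set0; apply/negP => /andP[/imset2P[v j _ _ ->] /imsetP[x xE Hx]].
    have hj := ltn_ord j.
    case: (cls v j) => [[a ea Ea] | [ra Ea] | [a ea Ea]]; move: Hx; rewrite Ea => Hx.
    * have : pedge (p1 v) a \in dvop_edges p1 :&: E1.
        by rewrite inE; move: xE; rewrite -(liftset_inj Hx) => ->; rewrite andbT; apply/imset2P; exists v a.
      by rewrite d1 inE.
    * have: (v, inord (j.+1 - k1)) \in lift_set (@ord0 m) x by rewrite -Hx set22.
      move/lift_lvl; rewrite /= vin; lia.
    * have: (p2 v (widen_ord (leqnSn k2) a), ord_max) \in lift_set (@ord0 m) x.
        by rewrite -Hx lift_in ?pedge_in1.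
      move/lift_lvl => /=; lia.
  + apply/setP => s; rewrite inE in_set0; apply/negP => /andP[/imset2P[v j _ _ ->] /imsetP[x xE Hx]].
    have hj := ltn_ord j.
    case: (cls v j) => [[a ea Ea] | [ra Ea] | [a ea Ea]]; move: Hx; rewrite Ea => Hx.
    * have: (p1 v (widen_ord (leqnSn k1) a), ord0) \in lift_set (@ord_max m) x.
        by rewrite -Hx lift_in ?pedge_in1.
      move/lift_lvl => /=; lia.
    * have: (v, inord (j - k1)) \in lift_set (@ord_max m) x by rewrite -Hx set21.
      move/lift_lvl; rewrite /= vin; lia.
    * have : pedge (p2 v) a \in dvop_edges p2 :&: E2.
        by rewrite inE; move: xE; rewrite -(liftset_inj Hx) => ->; rewrite andbT; apply/imset2P; exists v a.
      by rewrite d2 inE.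
  + apply/setP => s; rewrite inE in_set0; apply/negP => /andP[/imsetP[x xE ->] /imsetP[y yE Hxy]].
    have : x \in Egraph e by rewrite -u1 inE xE orbT.
    rewrite inE => /existsP[a /existsP[b /andP[_ /eqP hx]]].
    have: (a, ord0) \in lift_set (@ord_max m) y by rewrite -Hxy hx lift_in ?set21.
    move/lift_lvl => /=; lia.
- apply/setP => s; apply/idP/idP.
  + rewrite !inE => /orP[/orP[H|H]|H].
    * case/imset2P: H => v j _ _ ->.
      have := (q_emb e_sym hm (em1 v) (z1 v) (em2 v) (z2 v)).2 j.
      have -> : nat_of_ord (lift ord0 j) = j.+1 by rewrite lift0.
      move=> hs; rewrite /= q_pedge; apply/existsP; exists (qn m p1 p2 v j).
      by apply/existsP; exists (qn m p1 p2 v j.+1); rewrite eqxx andbT.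
    * case/imsetP: H => x xE ->.
      have : x \in Egraph e by rewrite -u1 inE xE orbT.
      rewrite inE => /existsP[a /existsP[b /andP[eab /eqP ->]]].
      rewrite lift2; apply/existsP; exists (a, ord0); apply/existsP; exists (b, ord0).
      by rewrite eqxx andbT /sharp /= eab.
    * case/imsetP: H => x xE ->.
      have : x \in Egraph e by rewrite -u2 inE xE orbT.
      rewrite inE => /existsP[a /existsP[b /andP[eab /eqP ->]]].
      rewrite lift2; apply/existsP; exists (a, ord_max); apply/existsP; exists (b, ord_max).
      rewrite eqxx andbT; apply/or3P; apply: Or32; by rewrite /= eqxx eab.
  + rewrite inE => /existsP[[x i] /existsP[[y i'] /andP[hs /eqP ->]]].
    move: hs; rewrite /sharp /= => /or3P[/and3P[hi hi' exy] | /and3P[hi hi' exy] | /andP[/eqP hxy hii]].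
    * have -> : i = ord0 by apply: ord_inj; apply/eqP.
      have -> : i' = ord0 by apply: ord_inj; apply/eqP.
      rewrite -lift2.
      have : [set x; y] \in Egraph e.
        by rewrite inE; apply/existsP; exists x; apply/existsP; exists y; rewrite exy eqxx.
      rewrite -u1 inE => /orP[/imset2P[w a _ _ Hw]| hE].
        rewrite Hw !inE -orbA; apply/orP; left; apply/imset2P.
        have hj : k1 - a.+1 < k1 + m + k2 by have := ltn_ord a; lia.
        exists w (Ordinal hj) => //.
        rewrite q_pedge; symmetry; apply: seg_lo => /=; have := ltn_ord a; lia.
      rewrite !inE; apply/orP; left; apply/orP; right; apply/imsetP; by exists [set x; y].
    * have -> : i = ord_max by apply: ord_inj; apply/eqP.
      have -> : i' = ord_max by apply: ord_inj; apply/eqP.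
      rewrite -lift2.
      have : [set x; y] \in Egraph e.
        by rewrite inE; apply/existsP; exists x; apply/existsP; exists y; rewrite exy eqxx.
      rewrite -u2 inE => /orP[/imset2P[w a _ _ Hw]| hE].
        rewrite Hw !inE -orbA; apply/orP; left; apply/imset2P.
        have hj : k1 + m + a < k1 + m + k2 by have := ltn_ord a; lia.
        exists w (Ordinal hj) => //.
        rewrite q_pedge; symmetry; apply: seg_hi => //=.
      rewrite !inE; apply/orP; right; apply/imsetP; by exists [set x; y].
    * rewrite -hxy {y hxy}.
      wlog h : i i' hii / i.+1 = i'.
        move=> W; case/orP: (hii) => /eqP h; first exact: W.
        rewrite setUC; apply: W => //; by rewrite h eqxx.
      rewrite !inE -orbA; apply/orP; left; apply/imset2P.
      have hi' := ltn_ord i'.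
      have hj : k1 + i < k1 + m + k2 by lia.
      exists x (Ordinal hj) => //.
      rewrite q_pedge seg_mid //=; last by lia.
      congr [set (x, _); (x, _)]; apply: ord_inj; rewrite vin; lia.
Qed.
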